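(* Let $G$ be an abelian, second countable, locally compact group with Haar measure $\mu$, let $K\subset G$ be a Borel set which is a semigroup, and assume there is a F\o lner sequence $(\Lambda_n)$ in $G$ with $\Lambda_n\subset K$ for all $n$. Let $\Sigma$ be the $\sigma$-algebra of Borel subsets of $G$ contained in $K$, and let $E\in\Sigma$ be relatively dense in $K$. Then: (1) There exist $r\in\mathbb{N}$ and $g_1,\dots,g_r\in K$ such that for each $B\in\Sigma$ with $\mu(B)<\infty$ there is $j\in\{1,\dots,r\}$ with $\mu((Bg_j)\cap E)\ge\mu(B)/r$. (2) $E$ has positive lower density relative to some F\o lner sequence $(\Lambda'_n)$ in $G$ with $\Lambda'_n\subset K$ for all $n$. (3) If $f:K\to\mathbb{R}$ is $\Sigma$-measurable with $f\ge0$ and $f(g)\ge\alpha$ for some $\alpha>0$ and all $g\in E$, then there exists a F\o lner sequence $(\Lambda'_n)$ in $G$ with $\Lambda'_n\subset K$ for all $n$ such that $\liminf_{n\to\infty}\frac{1}{\mu(\Lambda'_n)}\int_{\Lambda'_n}f\,d\mu>0$.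
   Context: A F\o lner sequence in $G$ is a sequence $(\Lambda_n)$ of compact subsets with $\mu(\Lambda_n)>0$ and $\lim_n\mu(\Lambda_n\,\Delta\,(\Lambda_ng))/\mu(\Lambda_n)=0$ for all $g\in G$. A set $E\subset K$ is relatively dense in $K$ if there exist $r\in\mathbb{N}$ and $g_1,\dots,g_r\in K$ with $E\cap\{gg_1,\dots,gg_r\}\neq\varnothing$ for all $g\in K$. $Bg=\{bg:b\in B\}$. A set $V\in\Sigma$ has positive lower density relative to $(\Lambda'_n)$ if $\liminf_{n\to\infty}\mu(\Lambda'_n\cap V)/\mu(\Lambda'_n)>0$. *)

(* Defs.v *)
From HB Require Import structures.
From mathcomp Require Import all_boot all_order all_algebra.
From mathcomp Require Import all_classical all_reals all_analysis.
Set Implicit Arguments. Unset Strict Implicit. Unset Printing Implicit Defensive.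
Import Order.TTheory GRing.Theory Num.Theory.
Import numFieldNormedType.Exports.
Local Open Scope classical_set_scope.
Local Open Scope ring_scope.

Notation borelType G := (@g_sigma_algebraType (GRing.Zmodule.sort G) (@open G)).

(* Translate of a set: B g = {b g : b in B}, written additively since G is
   abelian (topologicalZmodType). *)
Definition transl (G : zmodType) (B : set G) (g : G) : set G :=
  [set b + g | b in B].

Definition symdiff (T : Type) (A B : set T) : set T := (A `\` B) `|` (B `\` A).

Definition folner (R : realType) (G : topologicalZmodType)
  (mu : {measure set (borelType G) -> \bar R}) (L : nat -> set G) : Prop :=
  (forall n, compact (L n) /\ (0 < mu (L n))%E) /\
  (forall g : G,
     (fun n : nat => (fine (mu (symdiff (L n) (transl (L n) g)))
                       / fine (mu (L n)) : R)%R) @ \oo --> (0%R : R)).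

Local Open Scope ereal_scope.

(* mu is a (left = right, G abelian) Haar measure: a nonzero
   translation-invariant Radon measure on the Borel sets. *)
Definition haar_measure (R : realType) (G : topologicalZmodType)
  (mu : {measure set (borelType G) -> \bar R}) : Prop :=
  [/\ (forall (A : set (borelType G)) (g : G), measurable A ->
          mu (transl A g) = mu A),
      (forall U : set G, open U -> U !=set0 -> 0 < mu U),
      (forall C : set G, compact C -> mu C < +oo),
      (forall A : set (borelType G), measurable A ->
          mu A = ereal_inf [set mu U | U in [set U : set G | open U /\ A `<=` U]]) &
      (forall U : set G, open U ->
          mu U = ereal_sup [set mu C | C in [set C : set G | compact C /\ C `<=` U]])].

Definition rel_dense (G : zmodType) (K E : set G) : Prop :=
  exists (r : nat) (gs : 'I_r -> G), (forall i, K (gs i)) /\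
    forall g, K g -> exists i, E (g + gs i)%R.

Definition semigroup (G : zmodType) (K : set G) : Prop :=
  forall x y, K x -> K y -> K (x + y)%R.

(* Main.v *)
Require Import Defs.
From HB Require Import structures.
From mathcomp Require Import all_boot all_order all_algebra.
From mathcomp Require Import all_classical all_reals all_analysis.
From mathcomp Require Import measurable_realfun.
Import Order.TTheory GRing.Theory Num.Theory.
Import numFieldNormedType.Exports.
Local Open Scope classical_set_scope.
Local Open Scope ring_scope.

Lemma trans_cont (G : topologicalZmodType) (g : G) : continuous (fun x : G => x + g).
Proof.
move=> x; apply: (@continuous_comp _ _ _ (fun x => (x, g)) (fun x : G * G => x.1 + x.2)).
  by apply: cvg_pair; [exact: cvg_id|exact: cvg_cst].
exact: add_continuous.
Qed.

Lemma translE (G : zmodType) (A : set G) g : transl A g = (fun x => x - g) @^-1` A.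
Proof.
apply/seteqP; split => x /=.
  by case=> b Ab <-; rewrite addrK.
by move=> Ax; exists (x - g) => //; rewrite subrK.
Qed.

Lemma measurable_transl (G : topologicalZmodType) (A : set (borelType G)) (g : G) :
  measurable A -> measurable (transl A g : set (borelType G)).
Proof.
move=> mA; rewrite translE.
have mf : measurable_fun (setT : set (borelType G)) ((fun x : G => x - g) : borelType G -> borelType G).
  apply: (@measurability _ _ (borelType G) (borelType G) setT _ (@open G)) => //.
  move=> _ [U oU <-]; apply: sub_sigma_algebra; rewrite setTI.
  by apply: open_comp => // y _; exact: trans_cont.
by have := mf measurableT A mA; rewrite setTI.
Qed.

Lemma compact_measurable (G : topologicalZmodType) (A : set (borelType G)) :
  hausdorff_space G -> compact (A : set G) -> measurable A.
Proof.
move=> hG cA; have := compact_closed hG cA => /closed_openC oA.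
rewrite -(setCK A); apply: measurableC; exact: sub_sigma_algebra.
Qed.

Lemma compact_transl (G : topologicalZmodType) (A : set G) (g : G) :
  compact A -> compact (transl A g).
Proof.
move=> cA; apply: (@continuous_compact _ _ (fun x => x + g)) => //.
exact/continuous_subspaceT/trans_cont.
Qed.

Lemma symdiff_transl (G : zmodType) (A B : set G) g :
  symdiff (transl A g) (transl B g) = transl (symdiff A B) g.
Proof. by rewrite !translE. Qed.

Lemma transl_comm (G : zmodType) (A : set G) g h :
  transl (transl A g) h = transl (transl A h) g.
Proof. by rewrite !translE; apply/seteqP; split => x /=; rewrite addrAC. Qed.

Lemma transl_setI (G : zmodType) (A B : set G) g :
  transl (A `&` B) g = transl A g `&` transl B g.
Proof. by rewrite !translE preimage_setI. Qed.

Lemma transl_K (G : zmodType) (A : set G) g : transl (transl A (- g)) g = A.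
Proof. by rewrite !translE; apply/seteqP; split => x /=; rewrite opprK subrK. Qed.

Local Open Scope ereal_scope.
Lemma einf_lb (R : realType) (u : (\bar R)^nat) c : (forall n, c <= u n) -> c <= limn_einf u.
Proof.
move=> h; rewrite limn_einf_lim; apply: lime_ge; first exact: is_cvg_einfs.
by apply: nearW => n; apply: le_ereal_inf_tmp => _ [k _ <-]; exact: h.
Qed.

Theorem lemma5p12 (R : realType) (G : topologicalZmodType)
  (mu : {measure set (borelType G) -> \bar R})
  (K E : set (borelType G)) (L : nat -> set G) :
  hausdorff_space G -> locally_compact [set: G] -> @second_countable G ->
  haar_measure mu ->
  measurable K -> semigroup K ->
  folner mu L -> (forall n, L n `<=` K) ->
  measurable E -> E `<=` K -> rel_dense K E ->
  [/\
   (* (1) *)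
   exists (r : nat) (gs : 'I_r -> G), (forall j, K (gs j)) /\
     forall B : set (borelType G), measurable B -> B `<=` K -> mu B < +oo ->
       exists j : 'I_r, mu (transl B (gs j) `&` E) >= mu B * ((r%:R)^-1)%:E,
   (* (2) *)
   exists L' : nat -> set G, folner mu L' /\ (forall n, L' n `<=` K) /\
     0 < limn_einf (fun n => mu (L' n `&` E) * ((fine (mu (L' n)))^-1)%:E) &
   (* (3) *)
   forall (f : G -> R) (alpha : R),
     measurable_fun K f -> (forall g, K g -> (0 <= f g)%R) ->
     (0 < alpha)%R -> (forall g, E g -> (alpha <= f g)%R) ->
     exists L' : nat -> set G, folner mu L' /\ (forall n, L' n `<=` K) /\
       0 < limn_einf (fun n =>
             ((fine (mu (L' n)))^-1)%:E * \int[mu]_(x in L' n) (f x)%:E)].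
Proof.
move=> hG lcG scG [hinv hopen hcpt hout hin] mK sK [LF1 LF2] LK mE EK [r [gs [Kgs hgs]]].
have mL n : measurable (L n : set (borelType G)) := @compact_measurable G (L n) hG (LF1 n).1.
have [x0 Lx0] : exists x, L 0%N x.
  apply: contrapT => /forallNP h.
  have : L 0%N = set0 by apply/seteqP; split => x // /h.
  by move=> L0; have := (LF1 0%N).2; rewrite L0 measure0 ltxx.
have [i0 _] := hgs _ (LK _ _ Lx0).
case: r gs Kgs hgs i0 => [|r] gs Kgs hgs i0; first by case: i0.
have P1 : forall B : set (borelType G), measurable B -> B `<=` K -> mu B < +oo ->
       exists j : 'I_r.+1, mu (transl B (gs j) `&` E) >= mu B * ((r.+1%:R)^-1)%:E.
  move=> B mB BK Bfin.
  pose A := fun k : nat => B `&` transl E (- gs (inord k)) : set (borelType G).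
  have mA k : measurable (A k) by apply: measurableI => //; exact: measurable_transl.
  have key (j : 'I_r.+1) : mu (transl B (gs j) `&` E) = mu (A j).
    by rewrite -(hinv (A j) (gs j) (mA j)) /A inord_val transl_setI transl_K.
  have cov : B `<=` \big[setU/set0]_(k < r.+1) A k.
    move=> x Bx; rewrite -bigcup_mkord; have [i Ei] := hgs _ (BK _ Bx).
    exists (val i) => //=; split => //; rewrite translE /= inord_val opprK //.
  have sub : mu B <= \sum_(k < r.+1) mu (A k) := @content_subadditive _ _ _ mu B A r.+1 (fun k _ => mA k) mB cov.
  have B0 : 0 <= mu B by [].
  have Bf : mu B \is a fin_num by rewrite ge0_fin_numE.
  have Af k : mu (A k) \is a fin_num.
    rewrite ge0_fin_numE //; apply: le_lt_trans Bfin; apply: le_measure => //; rewrite ?inE //.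
    by move=> x [].
  have [//|/forallNP H] := pselect (exists j : 'I_r.+1, mu (transl B (gs j) `&` E) >= mu B * ((r.+1%:R)^-1)%:E).
  exfalso; move: sub; apply/negP; rewrite -ltNge.
  rewrite -(fineK Bf).
  under eq_bigr do rewrite -(fineK (Af _)).
  rewrite sumEFin lte_fin.
  apply: (@lt_le_trans _ _ (\sum_(k < r.+1) (fine (mu B) / r.+1%:R))%R).
    apply: ltr_sum; first by apply/hasP; exists ord0; rewrite ?mem_index_enum.
    move=> k _; have := H k; rewrite key -(fineK Bf) -(fineK (Af _)) -EFinM lee_fin.
    by rewrite /= => /negP; rewrite -ltNge.
  by rewrite sumr_const card_ord -(mulr_natr (fine (mu B) / r.+1%:R)) divfK.
have rpos : (0 < r.+1%:R :> R)%R by rewrite ltr0n.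
have [jn hjn] := choice (fun n => P1 (L n) (mL n) (LK n) (hcpt _ (LF1 n).1)).
pose L' := fun n => transl (L n) (gs (jn n)).
have muL' n : mu (L' n) = mu (L n) by rewrite hinv.
have FL' : folner mu L'.
  split.
    by move=> n; split; [exact: compact_transl (LF1 n).1|rewrite muL'; exact: (LF1 n).2].
  move=> h; have -> : (fun n => (fine (mu (symdiff (L' n) (transl (L' n) h))) / fine (mu (L' n)))%R)
    = (fun n => (fine (mu (symdiff (L n) (transl (L n) h))) / fine (mu (L n)))%R).
    apply/funext => n; rewrite muL' /L' transl_comm symdiff_transl hinv //.
    apply: measurableU; apply: measurableD => //; exact: measurable_transl.
  exact: LF2.
have L'K n : L' n `<=` K by move=> _ [b Lb <-]; apply: sK; [exact: LK Lb|exact: Kgs].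
have fm n : mu (L n) = (fine (mu (L n)))%:E.
  by rewrite fineK // ge0_fin_numE //; exact: hcpt (LF1 n).1.
have fpos n : (0 < fine (mu (L n)))%R by rewrite -lte_fin -fm; exact: (LF1 n).2.
have dens n : (r.+1%:R^-1)%:E <= mu (L' n `&` E) * ((fine (mu (L' n)))^-1)%:E.
  rewrite muL'; apply: (@le_trans _ _ (mu (L n) * (r.+1%:R^-1)%:E * ((fine (mu (L n)))^-1)%:E)).
    rewrite fm -!EFinM lee_fin mulrAC divff ?mul1r //; exact: lt0r_neq0.
  apply: lee_wpmul2r; first by rewrite lee_fin invr_ge0 ltW.
  exact: hjn.
have rinv : 0 < (r.+1%:R^-1)%:E :> \bar R by rewrite lte_fin invr_gt0.
split.
- by exists r.+1, gs; split.
- exists L'; split => //; split => //.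
  by apply: lt_le_trans rinv _; apply: einf_lb.
- move=> f alpha mf f0 a0 fE.
  exists L'; split => //; split => //.
  have ar : 0 < (alpha / r.+1%:R)%:E :> \bar R by rewrite lte_fin divr_gt0.
  apply: lt_le_trans ar _; apply: einf_lb => n.
  have mL'n : measurable (L' n : set (borelType G)) by exact: measurable_transl.
  have mL'E : measurable (L' n `&` E : set (borelType G)) by exact: measurableI.
  have mfn : measurable_fun (L' n : set (borelType G)) (fun x : borelType G => (f x)%:E).
    by apply/measurable_EFinP; apply: measurable_funS mf.
  have i1 : \int[mu]_(x in L' n `&` E) (f x)%:E <= \int[mu]_(x in L' n) (f x)%:E.
    apply: ge0_subset_integral => //; first by move=> x /L'K /f0; rewrite lee_fin.
  have i2 : \int[mu]_(x in L' n `&` E) (cst alpha%:E) x <= \int[mu]_(x in L' n `&` E) (f x)%:E.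
    apply: ge0_le_integral => //.
    all: try (by move=> x _ /=; rewrite lee_fin ltW); try (by apply: measurable_funS mfn => // x []); try (by move=> x [_ Ex] /=; rewrite lee_fin; exact: fE).
  rewrite integral_cst // in i2.
  have i3 := le_trans i2 i1.
  rewrite muL'.
  apply: (@le_trans _ _ ((fine (mu (L n)))^-1%:E * (alpha%:E * (mu (L n) * (r.+1%:R^-1)%:E)))).
    rewrite [X in _ * (_ * (X * _))]fm -!EFinM lee_fin mulrCA mulKf //; exact: lt0r_neq0.
  apply: lee_wpmul2l; first by rewrite lee_fin invr_ge0 ltW.
  apply: le_trans i3; apply: lee_wpmul2l; first by rewrite lee_fin ltW.
  exact: hjn.
Qed.
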